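(* Let $G$ be an abstract snake graph with $d\ge1$ tiles. Then $$\sum_P x(P)h(P)=x_{i_1}\cdots x_{i_d}\;\mathrm{UR}\!\left(\begin{pmatrix}\frac{x_w}{x_{i_d}}&x_z\mathsf y_{i_d}\\ -\frac{1}{x_z}&0\end{pmatrix}M_d\begin{pmatrix}0&x_a\\-\frac{1}{x_a}&\frac{x_b}{x_{i_1}}\end{pmatrix}\right),$$ where the sum is over all perfect matchings $P$ of $G$ and $\mathrm{UR}$ denotes the upper-right entry.
   Context: Abstract snake graph with $d\ge 1$ tiles: unit squares $G_1,\dots,G_d$ in the plane with $G_1=[0,1]^2$ and, for $1\le j\le d-1$, $G_{j+1}$ equal to the translate of $G_j$ either by $(0,1)$ (''$G_{j+1}$ north of $G_j$'') or by $(1,0)$ (''$G_{j+1}$ east of $G_j$''). The graph $G$ has as vertices the corners and as edges the sides of these squares (a shared side is one edge). Edges carry labels from some label set (labels need not be distinct): the south edge of $G_1$ is labeled $a$ and the west edge of $G_1$ is labeled $b$; for $1\le j\le d-1$, the edge shared by $G_j$ and $G_{j+1}$ is labeled $a_j$, and if $G_{j+1}$ is north of $G_j$ then the east edge of $G_j$ is labeled $i_{j+1}$ and the west edge of $G_{j+1}$ is labeled $i_j$, while if $G_{j+1}$ is east of $G_j$ then the north edge of $G_j$ is labeled $i_{j+1}$ and the south edge of $G_{j+1}$ is labeled $i_j$; finally, if $d$ is odd the north edge of $G_d$ is labeled $w$ and its east edge $z$, and if $d$ is even the east edge of $G_d$ is labeled $w$ and its north edge $z$. The tile $G_j$ itself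 carries the label $i_j$. To each label $\ell$ attach commuting indeterminates $x_\ell$ and (for the tile labels) $\mathsf y_\ell$. For a perfect matching $P$ of $G$, its weight is $x(P)=\prod_{e\in P}x_{\mathrm{label}(e)}$. Let $P_-$ (the minimal matching) be the unique perfect matching of $G$ consisting only of edges on the boundary of $G_1\cup\dots\cup G_d$ and containing the south edge of $G_1$. For every perfect matching $P$, the symmetric difference $P\ominus P_-$ is the set of boundary edges of a union of cycles enclosing a set of tiles $\{G_j: j\in J(P)\}$; the height monomial is $h(P)=\prod_{j\in J(P)}\mathsf y_{i_j}$. Matrix of $G$: for $1\le j\le d-1$, let $m_j=\begin{pmatrix}1&0\\ \frac{x_{a_j}}{x_{i_j}x_{i_{j+1}}}&\mathsf y_{i_j}\end{pmatrix}$ if either ($j$ is odd and $G_{j+1}$ is north of $G_j$) or ($j$ is even and $G_{j+1}$ is east of $G_j$), and $m_j=\begin{pmatrix}\frac{x_{i_{j+1}}}{x_{i_j}}&x_{a_j}\mathsf y_{i_j}\\0&\frac{x_{i_j}\mathsf y_{i_j}}{x_{i_{j+1}}}\end{pmatrix}$ otherwise. Set $M_d=m_{d-1}\cdots m_1$ for $d\ge2$ and $M_1$ the $2\times 2$ identity matrix. *)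

(* Defs.v *)
From HB Require Import structures.
From mathcomp Require Import all_boot all_order all_algebra.
Set Implicit Arguments. Unset Strict Implicit. Unset Printing Implicit Defensive.
Import Order.TTheory GRing.Theory Num.Theory.

(* Tiles are 0-indexed: tile k (k < d) is G_{k+1} of the paper.
   dirs`_k = true  means G_{k+2} is north of G_{k+1};
   dirs`_k = false means G_{k+2} is east of G_{k+1}.
   li k = label i_{k+1}  (k < d),   lA k = label a_{k+1}  (k < d-1). *)
Record snake (L : Type) := Snake {
  dirs : seq bool;
  la : L; lb : L; lw : L; lz : L;
  li : nat -> L;
  lA : nat -> L }.

Section SnakeGraph.
Variables (L : Type) (G : snake L).

Definition ntiles : nat := (size (dirs G)).+1.

(* lower-left corner of tile k *)
Definition corner (k : nat) : nat * nat :=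
  (count negb (take k (dirs G)), count id (take k (dirs G))).

(* an edge (x, y, true) is the horizontal segment (x,y)-(x+1,y);
   an edge (x, y, false) is the vertical segment (x,y)-(x,y+1). *)
Definition edge := (nat * nat * bool)%type.
Definition south (c : nat * nat) : edge := (c.1, c.2, true).
Definition north (c : nat * nat) : edge := (c.1, c.2.+1, true).
Definition west  (c : nat * nat) : edge := (c.1, c.2, false).
Definition east  (c : nat * nat) : edge := (c.1.+1, c.2, false).

Definition tile_sides (k : nat) : seq edge :=
  [:: south (corner k); west (corner k); north (corner k); east (corner k)].

(* labelled edges created by the passage from tile k to tile k+1 *)
Definition transition (k : nat) : seq (edge * L) :=
  let c := corner k in let c' := corner k.+1 in
  if nth false (dirs G) k then
    [:: (north c, lA G k); (east c, li G k.+1); (west c', li G k)]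
  else
    [:: (east c, lA G k); (north c, li G k.+1); (south c', li G k)].

Definition final_edges : seq (edge * L) :=
  let c := corner (size (dirs G)) in
  if odd ntiles then [:: (north c, lw G); (east c, lz G)]
  else [:: (east c, lw G); (north c, lz G)].

(* the list of all edges of G, each with its label (each edge occurs once) *)
Definition ledges : seq (edge * L) :=
  [:: (south (corner 0), la G); (west (corner 0), lb G)]
  ++ flatten (map transition (iota 0 (size (dirs G)))) ++ final_edges.

Definition nE : nat := size ledges.

Definition edge_of (e : 'I_nE) : edge := (nth (south (0, 0), la G) ledges e).1.
Definition label_of (e : 'I_nE) : L := (nth (south (0, 0), la G) ledges e).2.

Definition endpoints (e : edge) : seq (nat * nat) :=
  let: (x, y, h) := e in [:: (x, y); if h then (x.+1, y) else (x, y.+1)].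

Definition is_perfect (S : {set 'I_nE}) : bool :=
  [forall e : 'I_nE,
     all (fun v => #|[set f in S | v \in endpoints (edge_of f)]| == 1)
         (endpoints (edge_of e))].

Definition is_boundary (e : edge) : bool :=
  count (fun k => e \in tile_sides k) (iota 0 ntiles) == 1.

Definition is_minimal_matching (S : {set 'I_nE}) : bool :=
  [&& is_perfect S,
      [forall e in S, is_boundary (edge_of e)] &
      [exists e in S, edge_of e == south (corner 0)]].

(* tile k is enclosed by the union of cycles formed by the edge set D
   (even-odd rule: the horizontal ray going west from the centre of tile k
   crosses an odd number of edges of D) *)
Definition encloses (D : {set 'I_nE}) (k : nat) : bool :=
  odd #|[set e in D | let: (x, y, h) := edge_of e in
                      [&& ~~ h, x <= (corner k).1 & y == (corner k).2]]|.

Definition symdiff (S T : {set 'I_nE}) : {set 'I_nE} := (S :\: T) :|: (T :\: S).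

Local Open Scope ring_scope.
Variables (F : fieldType) (xv yv : L -> F).

Definition weight (S : {set 'I_nE}) : F := \prod_(e in S) xv (label_of e).

Definition height (Pm S : {set 'I_nE}) : F :=
  \prod_(k < ntiles | encloses (symdiff S Pm) k) yv (li G k).

Definition mx2 (p q r s : F) : 'M[F]_2 :=
  \matrix_(i < 2, j < 2)
     if (i == 0 :> nat) then (if (j == 0 :> nat) then p else q)
     else (if (j == 0 :> nat) then r else s).

(* m_{k+1} of the paper *)
Definition mj (k : nat) : 'M[F]_2 :=
  let xj := xv (li G k) in let xj1 := xv (li G k.+1) in let yj := yv (li G k) in
  if nth false (dirs G) k == ~~ odd k then
    mx2 1 0 (xv (lA G k) / (xj * xj1)) yj
  else
    mx2 (xj1 / xj) (xv (lA G k) * yj) 0 (xj * yj / xj1).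

(* M_d = m_{d-1} ... m_1 *)
Definition Mmat : 'M[F]_2 :=
  foldl (fun acc k => mj k *m acc) 1%:M (iota 0 (size (dirs G))).

Definition left_mx : 'M[F]_2 :=
  let xd := xv (li G (size (dirs G))) in
  mx2 (xv (lw G) / xd) (xv (lz G) * yv (li G (size (dirs G)))) (- (xv (lz G))^-1) 0.

Definition right_mx : 'M[F]_2 :=
  mx2 0 (xv (la G)) (- (xv (la G))^-1) (xv (lb G) / xv (li G 0)).

Definition UR (A : 'M[F]_2) : F := A ord0 ord_max.

End SnakeGraph.

(* Main.v *)
Require Import Defs.
From HB Require Import structures.
From mathcomp Require Import all_boot all_order all_algebra.
From mathcomp Require Import zify ring.
Set Implicit Arguments. Unset Strict Implicit. Unset Printing Implicit Defensive.
Import Order.TTheory GRing.Theory Num.Theory.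

Section Geo.
Variables (L : Type) (G : snake L).
Local Notation n := (size (dirs G)).
Local Notation dr k := (nth false (dirs G) k).
Local Notation c k := (corner G k).

Lemma corner0 : c 0 = (0, 0).
Proof. by rewrite /corner take0. Qed.

Lemma cornerS k : k < n ->
  c k.+1 = if dr k then ((c k).1, (c k).2.+1) else ((c k).1.+1, (c k).2).
Proof.
move=> Hk; rewrite /corner (take_nth false Hk) -!cats1 !count_cat /=.
by case: (nth false (dirs G) k) => /=; rewrite ?addn0 ?addn1.
Qed.

Lemma corner_sum k : k <= n -> (c k).1 + (c k).2 = k.
Proof.
move=> Hk; rewrite /corner /= addnC.
have := count_predC id (take k (dirs G)).
by rewrite size_take_min (minn_idPl Hk).
Qed.

Lemma corner_mono m k : m <= k -> k <= n -> (c m).1 <= (c k).1 /\ (c m).2 <= (c k).2.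
Proof.
move=> Hmk Hk; rewrite /corner /=.
have -> : take k (dirs G) = take m (dirs G) ++ take (k - m) (drop m (dirs G)).
  by rewrite -{1}(subnKC Hmk) takeD.
by rewrite !count_cat !leq_addr.
Qed.

Lemma size_transition k : size (transition G k) = 3.
Proof. by rewrite /transition; case: ifP. Qed.

Lemma size_final : size (final_edges G) = 2.
Proof. by rewrite /final_edges; case: ifP. Qed.

Lemma size_flat_tr m0 m : size (flatten (map (transition G) (iota m0 m))) = 3 * m.
Proof.
elim: m m0 => [|m IH] m0 //=.
by rewrite size_cat size_transition IH mulnS.
Qed.

Lemma nE_eq : nE G = 3 * n + 4.
Proof.
rewrite /nE /ledges !size_cat size_flat_tr size_final /=; lia.
Qed.

Lemma nth_flat_tr x0 m0 m k r : k < m -> r < 3 ->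
  nth x0 (flatten (map (transition G) (iota m0 m))) (3 * k + r) =
  nth x0 (transition G (m0 + k)) r.
Proof.
elim: m m0 k => [|m IH] m0 k //= Hk Hr.
rewrite nth_cat size_transition.
case: k Hk => [|k] Hk.
  by rewrite muln0 add0n Hr addn0.
have -> : (3 * k.+1 + r < 3) = false by lia.
have -> : 3 * k.+1 + r - 3 = 3 * k + r by lia.
by rewrite IH // addSnnS.
Qed.

Definition x0e : edge * L := (south (0, 0), la G).

Lemma nth_ledges_tr k r : k < n -> r < 3 ->
  nth x0e (ledges G) (2 + (3 * k + r)) = nth x0e (transition G k) r.
Proof.
move=> Hk Hr; rewrite /ledges nth_cat /= addKn.
by rewrite nth_cat size_flat_tr (_ : 3 * k + r < 3 * n) ?nth_flat_tr //; lia.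
Qed.

Lemma nth_ledges_fin r : r < 2 ->
  nth x0e (ledges G) (2 + (3 * n + r)) = nth x0e (final_edges G) r.
Proof.
move=> Hr; rewrite /ledges nth_cat /= addKn.
by rewrite nth_cat size_flat_tr ltnNge leq_addr /= addKn.
Qed.

End Geo.

Arguments corner : simpl never.
Section Abs.
Variables (L : Type) (G : snake L).
Local Notation n := (size (dirs G)).
Local Notation dr k := (nth false (dirs G) k).
Local Notation c k := (corner G k).

Definition crd (a : nat * bool) : nat * nat :=
  if a.1 == 0 then (0, 0) else if a.1 == n.+2 then ((c n).1.+1, (c n).2.+1)
  else if a.2 then ((c a.1.-1).1, (c a.1.-1).2.+1) else ((c a.1.-1).1.+1, (c a.1.-1).2).

Definition vld (a : nat * bool) : bool :=
  [|| (a.1 == 0) && ~~ a.2, (0 < a.1 <= n.+1) | (a.1 == n.+2) && ~~ a.2].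

Lemma coord_sum a : vld a -> (crd a).1 + (crd a).2 = a.1.
Proof.
case: a => l b; rewrite /vld /crd /=.
case: (l =P 0) => [->|Hl0] //=.
case: (l =P n.+2) => [->|Hl2] /=.
  by rewrite addSn addnS corner_sum.
case/orP => [/andP[H1 H2]|//].
have Hl : l.-1 <= n by lia.
have := corner_sum Hl; case: b => /=; lia.
Qed.

Lemma coord_inj a b : vld a -> vld b -> crd a = crd b -> a = b.
Proof.
move=> Va Vb E.
have El : a.1 = b.1 by rewrite -(coord_sum Va) -(coord_sum Vb) E.
move: Va Vb E; case: a El => l x; case: b => l' y /= <-.
rewrite /vld /crd /=.
case: (l =P 0) => [->|Hl0] /=; first by case: x; case: y.
case: (l =P n.+2) => [->|Hl2] /=; first by rewrite ltnn; case: x; case: y.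
by case: x; case: y => //= _ _ [] /eqP; rewrite ?eqSS; lia.
Qed.

Definition aep_kr (k r : nat) : seq (nat * bool) :=
  if k < n then
    if dr k then
      match r with 0 => [:: (k.+1, true); (k.+2, false)]
                 | 1 => [:: (k.+1, false); (k.+2, false)]
                 | _ => [:: (k.+1, true); (k.+2, true)] end
    else
      match r with 0 => [:: (k.+1, false); (k.+2, true)]
                 | 1 => [:: (k.+1, true); (k.+2, true)]
                 | _ => [:: (k.+1, false); (k.+2, false)] end
  else [:: (n.+1, (r == 0) == ~~ odd n); (n.+2, false)].

Definition aep (j : nat) : seq (nat * bool) :=
  if j == 0 then [:: (0, false); (1, false)]
  else if j == 1 then [:: (0, false); (1, true)]
  else aep_kr ((j - 2) %/ 3) ((j - 2) %% 3).

Lemma aep_kr_eq k r : r < 3 -> aep (2 + (3 * k + r)) = aep_kr k r.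
Proof.
move=> Hr; rewrite /aep addKn.
have -> : (2 + (3 * k + r) == 0) = false by lia.
have -> : (2 + (3 * k + r) == 1) = false by lia.
have -> : (3 * k + r) %/ 3 = k by lia.
have -> : (3 * k + r) %% 3 = r by lia.
by [].
Qed.

Lemma idx_cases j : j < nE G ->
  [\/ j = 0, j = 1, exists2 k, k < n & exists2 r, r < 3 & j = 2 + (3 * k + r)
    | exists2 r, r < 2 & j = 2 + (3 * n + r)].
Proof.
rewrite nE_eq => Hj.
case: (j =P 0) => [->|H0]; first by constructor 1.
case: (j =P 1) => [->|H1]; first by constructor 2.
have Hj2 : j = 2 + (3 * ((j - 2) %/ 3) + (j - 2) %% 3) by lia.
case: (ltnP ((j - 2) %/ 3) n) => Hk.
  constructor 3; exists ((j - 2) %/ 3) => //; exists ((j - 2) %% 3) => //; lia.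
constructor 4; exists ((j - 2) %% 3); lia.
Qed.

Lemma ep_edge (j : 'I_(nE G)) : endpoints (edge_of j) = map crd (aep j).
Proof.
rewrite /edge_of -/(x0e G).
case: (idx_cases (ltn_ord j)) => [->|->|[k Hk [r Hr ->]]|[r Hr ->]].
- by rewrite /aep /= /crd /= take0.
- by rewrite /aep /= /crd /= take0.
- rewrite nth_ledges_tr // aep_kr_eq // /aep_kr Hk /transition.
  have HS := cornerS Hk.
  have Hk1 : k.+1 == 0 = false by [].
  have Hk2 : (k.+1 == n.+2) = false by lia.
  have Hk3 : (k.+2 == 0) = false by [].
  have Hk4 : (k.+2 == n.+2) = false by lia.
  rewrite HS.
  case: (nth false (dirs G) k) HS => HS;
  (case: r Hr => [|[|[|r]]] Hr //=);
  by rewrite /crd /= Hk2 Hk4; move: HS; rewrite /corner => -[-> ->].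
- rewrite nth_ledges_fin // aep_kr_eq ?(ltn_trans Hr) // /aep_kr ltnn /final_edges /ntiles /=.
  have Hk2 : (n.+1 == n.+2) = false by lia.
  case: r Hr => [|[|r]] Hr //; case: (odd n); rewrite /crd /= Hk2 eqxx //.
Qed.

End Abs.

Lemma count_sub (p P : pred nat) (l : seq nat) N :
  uniq l -> all (fun j => j < N) l -> (forall j, j < N -> P j = (j \in l)) ->
  count (fun j => p j && P j) (iota 0 N) = count p l.
Proof.
move=> Ul Al HP.
rewrite -(count_filter p P) /=.
move: p; apply/permP; apply: uniq_perm; first by rewrite filter_uniq // iota_uniq.
  by [].
move=> j; rewrite mem_filter mem_iota /= add0n.
case: (ltnP j N) => Hj; first by rewrite andbT HP.
rewrite andbF; apply/esym/negP => /(allP Al); rewrite ltnNge Hj.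
by [].
Qed.

Section Cnt.
Variables (L : Type) (G : snake L).
Local Notation n := (size (dirs G)).
Local Notation dr k := (nth false (dirs G) k).

Definition memS (S : {set 'I_(nE G)}) (j : nat) : bool :=
  [exists f : 'I_(nE G), (f \in S) && (val f == j)].

Lemma memS_ord S (f : 'I_(nE G)) : memS S f = (f \in S).
Proof.
apply/existsP/idP => [[g /andP[Hg /eqP/val_inj <-]]|Hf] //.
by exists f; rewrite Hf eqxx.
Qed.

Definition cnt (S : {set 'I_(nE G)}) (a : nat * bool) := count (fun j => memS S j && (a \in aep G j)) (iota 0 (nE G)).

Lemma aep_valid j : j < nE G -> all (vld G) (aep G j).
Proof.
move=> Hj; case: (idx_cases Hj) => [->|->|[k Hk [r Hr ->]]|[r Hr ->]] //.
- by rewrite aep_kr_eq // /aep_kr Hk; case: (dr k); case: r Hr => [|[|[|r]]] Hr //=;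
     rewrite /vld /=; lia.
- rewrite aep_kr_eq ?(ltn_trans Hr) // /aep_kr ltnn /= /vld /= eqxx /= andbT.
  lia.
Qed.

Lemma mem_map_coord a l : vld G a -> all (vld G) l ->
  (crd G a \in map (crd G) l) = (a \in l).
Proof.
move=> Va Vl; apply/mapP/idP => [[b Hb /coord_inj Hab]|Ha].
  by rewrite Hab //; apply: (allP Vl).
by exists a.
Qed.

Lemma card_ord_count N (p : pred nat) : #|[pred f : 'I_N | p f]| = count p (iota 0 N).
Proof.
rewrite -sum1_card -sum1_count.
transitivity (\sum_(i < N | p i) 1)%N; first by apply: eq_bigl.
by rewrite -(big_mkord p (fun _ => 1%N)) /index_iota subn0.
Qed.

Lemma card_cnt (S : {set 'I_(nE G)}) a : vld G a ->
  #|[set f in S | crd G a \in endpoints (edge_of f)]| = cnt S a.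
Proof.
move=> Va; rewrite /cnt -card_ord_count; apply: eq_card => f.
rewrite !inE ep_edge mem_map_coord ?aep_valid //= memS_ord //.
Qed.

End Cnt.

Section Cnt2.
Variables (L : Type) (G : snake L).
Local Notation n := (size (dirs G)).
Local Notation dr k := (nth false (dirs G) k).

Lemma perfectE (S : {set 'I_(nE G)}) :
  is_perfect S <-> (forall a, vld G a -> cnt S a = 1).
Proof.
split.
- move=> /forallP HP a Va.
  have [j Hj Ha] : exists2 j, j < nE G & a \in aep G j.
    move: Va; case: a => l b; rewrite /vld /= => /or3P[/andP[/eqP -> /negPf ->]|/andP[H1 H2]|/andP[/eqP -> /negPf ->]].
    + exists 0; first by rewrite nE_eq; lia.
      by rewrite /aep /= inE eqxx.
    + case: (ltnP l.-1 n) => Hk.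
        exists (2 + (3 * l.-1 + (if dr l.-1 == b then 0 else 1))).
          by rewrite nE_eq; case: ifP => _; lia.
        rewrite aep_kr_eq; last by case: ifP.
        rewrite /aep_kr Hk (_ : l = l.-1.+1); last by lia.
        by case: (dr l.-1); case: b => /=; rewrite !inE /= ?eqxx ?orbT.
      exists (2 + (3 * n + (if b == ~~ odd n then 0 else 1))).
        by rewrite nE_eq; case: ifP => _; lia.
      rewrite aep_kr_eq; last by case: ifP.
      rewrite /aep_kr ltnn (_ : l = n.+1); last by lia.
      by case: (odd n); case: b => /=; rewrite !inE /= ?eqxx ?orbT.
    + exists (2 + (3 * n + 0)); first by rewrite nE_eq; lia.
      by rewrite aep_kr_eq // /aep_kr ltnn in_cons mem_seq1; apply/orP; right; apply/eqP.
  have := allP (HP (Ordinal Hj)) (crd G a).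
  rewrite ep_edge /= (mem_map_coord Va (aep_valid Hj)) Ha => /(_ isT) /eqP.
  by rewrite card_cnt.
- move=> H; apply/forallP => f; apply/allP => v.
  rewrite ep_edge => /mapP [a Ha ->].
  have Va : vld G a := allP (aep_valid (ltn_ord f)) a Ha.
  by rewrite card_cnt // H.
Qed.

Definition in_l (k : nat) (b : bool) : seq nat :=
  if k is m.+1 then
    (if dr m then (if b then [:: 4 + 3 * m] else [:: 2 + 3 * m; 3 + 3 * m])
     else (if b then [:: 2 + 3 * m; 3 + 3 * m] else [:: 4 + 3 * m]))
  else [:: if b then 1 else 0].

Definition out_l (k : nat) (b : bool) : seq nat :=
  if k < n then
    (if dr k then (if b then [:: 2 + 3 * k; 4 + 3 * k] else [:: 3 + 3 * k])
     else (if b then [:: 3 + 3 * k] else [:: 2 + 3 * k; 4 + 3 * k]))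
  else [:: if b == ~~ odd n then 2 + 3 * n else 3 + 3 * n].

Definition inc k b := in_l k b ++ out_l k b.

Lemma mem_aep_R k b j : k <= n -> j < nE G ->
  ((k.+1, b) \in aep G j) = (j \in inc k b).
Proof.
move=> Hk Hj; rewrite /inc /in_l /out_l.
case: (idx_cases Hj) => [->|->|[m Hm [r Hr ->]]|[r Hr ->]].
- by case: k Hk => [|k] Hk; case: b; repeat (case: ifP => ?); rewrite ?mem_cat !inE ?xpair_eqE /=; lia.
- by case: k Hk => [|k] Hk; case: b; repeat (case: ifP => ?); rewrite ?mem_cat !inE ?xpair_eqE /=; lia.
- rewrite aep_kr_eq // /aep_kr Hm.
  have [Ekm|Hne] := eqVneq k m.
    subst m.
    rewrite Hm; case: k Hk Hm => [|k] Hk Hm; case: b;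
    case: r Hr => [|[|[|r]]] Hr //; repeat (case: ifP => ?);
    rewrite ?mem_cat !inE ?xpair_eqE /=; lia.
  have [->|Hne2] := eqVneq k m.+1.
    case: b; case: r Hr => [|[|[|r]]] Hr //; repeat (case: ifP => ?);
    rewrite ?mem_cat !inE ?xpair_eqE /=; lia.
  case: k Hk Hne Hne2 => [|k] Hk Hne Hne2; case: b;
  case: r Hr => [|[|[|r]]] Hr //; repeat (case: ifP => ?);
  rewrite ?mem_cat !inE ?xpair_eqE /=; lia.
- rewrite aep_kr_eq ?(ltn_trans Hr) // /aep_kr ltnn.
  case: k Hk => [|k] Hk; case: b;
  case: r Hr => [|[|r]] Hr //; repeat (case: ifP => ?);
  rewrite ?mem_cat !inE ?xpair_eqE /=; lia.
Qed.

End Cnt2.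

Section Cnt3.
Variables (L : Type) (G : snake L).
Local Notation n := (size (dirs G)).
Local Notation dr k := (nth false (dirs G) k).

Lemma cnt_R (S : {set 'I_(nE G)}) k b : k <= n ->
  cnt S (k.+1, b) = count (memS S) (inc G k b).
Proof.
move=> Hk; rewrite /cnt; apply: count_sub.
- rewrite /inc /in_l /out_l; case: k Hk => [|k] Hk; case: b;
  repeat (case: ifP => ?); rewrite /= ?inE; lia.
- rewrite nE_eq /inc /in_l /out_l; case: k Hk => [|k] Hk; case: b;
  repeat (case: ifP => ?); rewrite /=; lia.
- by move=> j Hj; rewrite mem_aep_R.
Qed.

Lemma cnt_C0 (S : {set 'I_(nE G)}) : cnt S (0, false) = memS S 0 + memS S 1.
Proof.
rewrite /cnt (@count_sub _ _ [:: 0; 1]) /= ?addn0 //.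
move=> j Hj; case: (idx_cases Hj) => [->|->|[m Hm [r Hr ->]]|[r Hr ->]] //.
- rewrite aep_kr_eq // /aep_kr Hm !inE.
  by case: (dr m); case: r Hr => [|[|[|r]]] Hr //=; rewrite ?xpair_eqE /=; lia.
- rewrite aep_kr_eq ?(ltn_trans Hr) // /aep_kr ltnn !inE ?xpair_eqE /=; lia.
Qed.

Lemma cnt_T (S : {set 'I_(nE G)}) :
  cnt S (n.+2, false) = memS S (2 + 3 * n) + memS S (3 + 3 * n).
Proof.
rewrite /cnt (@count_sub _ _ [:: 2 + 3 * n; 3 + 3 * n]) /= ?addn0 //.
- by rewrite !inE; lia.
- by rewrite nE_eq /=; lia.
move=> j Hj; case: (idx_cases Hj) => [->|->|[m Hm [r Hr ->]]|[r Hr ->]].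
- by rewrite /aep /= !inE ?xpair_eqE /=; lia.
- by rewrite /aep /= !inE ?xpair_eqE /=; lia.
- rewrite aep_kr_eq // /aep_kr Hm !inE.
  by case: (dr m); case: r Hr => [|[|[|r]]] Hr //=; rewrite !inE ?xpair_eqE /=; lia.
- rewrite aep_kr_eq ?(ltn_trans Hr) // /aep_kr ltnn !inE ?xpair_eqE /=.
  case: r Hr => [|[|r]] Hr //=; lia.
Qed.

End Cnt3.

Section Build.
Variables (L : Type) (G : snake L).
Local Notation n := (size (dirs G)).
Local Notation dr k := (nth false (dirs G) k).

Definition memb_kr (s : nat -> bool) k r : bool :=
  if k < n then
    (if dr k then match r with 0 => ~~ s k && ~~ s k.+1 | 1 => s k | _ => ~~ s k && s k.+1 end
     else match r with 0 => s k && s k.+1 | 1 => ~~ s k | _ => s k && ~~ s k.+1 end)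
  else (if (r == 0) == ~~ odd n then ~~ s n else s n).

Definition memb (s : nat -> bool) (j : nat) : bool :=
  if j == 0 then ~~ s 0 else if j == 1 then s 0
  else memb_kr s ((j - 2) %/ 3) ((j - 2) %% 3).

Lemma memb_eq s k r : r < 3 -> memb s (2 + (3 * k + r)) = memb_kr s k r.
Proof.
move=> Hr; rewrite /memb addKn.
have -> : (2 + (3 * k + r) == 0) = false by lia.
have -> : (2 + (3 * k + r) == 1) = false by lia.
have -> : (3 * k + r) %/ 3 = k by lia.
have -> : (3 * k + r) %% 3 = r by lia.
by [].
Qed.

Lemma memb_e s k : memb s (2 + 3 * k) = memb_kr s k 0.
Proof. by rewrite -memb_eq // addn0. Qed.
Lemma memb_f s k : memb s (3 + 3 * k) = memb_kr s k 1.
Proof. by rewrite -memb_eq //; congr memb; lia. Qed.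
Lemma memb_g s k : memb s (4 + 3 * k) = memb_kr s k 2.
Proof. by rewrite -memb_eq //; congr memb; lia. Qed.

Lemma memb_fin s b :
  memb s (if b == ~~ odd n then 2 + 3 * n else 3 + 3 * n) = (if b then ~~ s n else s n).
Proof.
by case: ifP => Hb; rewrite ?memb_e ?memb_f /memb_kr ltnn /=; move: Hb; case: b; case: (odd n).
Qed.

Definition allowed (s : nat -> bool) :=
  forall k, k < n -> if dr k then ~~ (s k && s k.+1) else s k || s k.+1.

Definition build (s : nat -> bool) : {set 'I_(nE G)} := [set f : 'I_(nE G) | memb s f].

Lemma memS_build s j : j < nE G -> memS (build s) j = memb s j.
Proof.
move=> Hj; apply/existsP/idP => [[f /andP[Hf /eqP <-]]|Hm].
  by rewrite inE in Hf.
by exists (Ordinal Hj); rewrite inE Hm eqxx.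
Qed.

Lemma inc_lt k b : k <= n -> all (fun j => j < nE G) (inc G k b).
Proof.
move=> Hk; rewrite nE_eq /inc /in_l /out_l; case: k Hk => [|k] Hk; case: b;
repeat (case: ifP => ?); rewrite /=; lia.
Qed.

Lemma build_perfect s : allowed s -> is_perfect (build s).
Proof.
move=> Ha; apply/perfectE => -[l b]; rewrite /vld /=.
case/or3P => [/andP[/eqP -> /negPf ->]|/andP[H1 H2]|/andP[/eqP -> /negPf ->]].
- rewrite cnt_C0 !memS_build; try (rewrite nE_eq; lia).
  by rewrite /memb /=; case: (s 0).
- have -> : l = l.-1.+1 by lia.
  have Hk : l.-1 <= n by lia.
  rewrite cnt_R // (eq_in_count (a2 := memb s)); last first.
    by move=> j /(allP (inc_lt b Hk)) Hj; rewrite memS_build.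
  move: Hk; case: (l.-1) => [|k] Hk.
    rewrite /inc /in_l /out_l.
    case Hn: (0 < n).
      rewrite !count_cat; rewrite [in X in X + _]/memb.
      have := Ha 0 Hn.
      by case Hd: (dr 0); case: b => /=; rewrite ?memb_e ?memb_f ?memb_g /memb_kr Hn ?Hd /=; lia.
    rewrite !count_cat /= memb_fin.
    have Hn0 : n = 0 by lia.
    by rewrite Hn0; case: b; rewrite /memb /=; lia.
  rewrite /inc /in_l /out_l !count_cat.
  have Hk1 : k < n by lia.
  case Hn: (k.+1 < n).
    have := Ha k Hk1; have := Ha k.+1 Hn.
    by case Hd: (dr k); case Hd1: (dr k.+1); case: b => /=;
      rewrite ?memb_e ?memb_f ?memb_g /memb_kr Hk1 Hn ?Hd ?Hd1 /=; lia.
  have Hnk : n = k.+1 by lia.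
  have := Ha k Hk1.
  by case Hd: (dr k); case: b => /=; rewrite ?memb_fin ?memb_e ?memb_f ?memb_g /memb_kr Hk1 ?Hd /= Hnk; lia.
- rewrite cnt_T !memS_build ?nE_eq; try lia.
  have -> : 3 + 3 * n = 2 + (3 * n + 1) by lia.
  rewrite memb_e memb_eq // /memb_kr ltnn /=.
  by case: (odd n) => /=; lia.
Qed.

Definition sig_of (S : {set 'I_(nE G)}) (k : nat) : bool :=
  if k is m.+1 then
    (if dr m then memS S (4 + 3 * m) else memS S (2 + 3 * m) || memS S (3 + 3 * m))
  else memS S 1.

Lemma in_lS k b : in_l G k.+1 b =
  if dr k then (if b then [:: 4 + 3 * k] else [:: 2 + 3 * k; 3 + 3 * k])
  else (if b then [:: 2 + 3 * k; 3 + 3 * k] else [:: 4 + 3 * k]).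
Proof. by []. Qed.

Lemma out_l_lt k b : k < n -> out_l G k b =
  if dr k then (if b then [:: 2 + 3 * k; 4 + 3 * k] else [:: 3 + 3 * k])
  else (if b then [:: 3 + 3 * k] else [:: 2 + 3 * k; 4 + 3 * k]).
Proof. by move=> Hk; rewrite /out_l Hk. Qed.

Lemma out_l_n b : out_l G n b = [:: if b == ~~ odd n then 2 + 3 * n else 3 + 3 * n].
Proof. by rewrite /out_l ltnn. Qed.

Lemma perfect_build S : is_perfect S -> allowed (sig_of S) /\ S = build (sig_of S).
Proof.
move/perfectE => H.
have H0 : memS S 0 + memS S 1 = 1 by rewrite -cnt_C0; apply: H.
have HR : forall k b, k <= n ->
    (count (memS S) (in_l G k b) + count (memS S) (out_l G k b) = 1)%N.
  move=> k b Hk; rewrite -count_cat -cnt_R //; apply: H; rewrite /vld /=; lia.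
have Inv : forall k, k <= n -> (count (memS S) (in_l G k true) = sig_of S k :> nat) /\
    (count (memS S) (in_l G k false) = ~~ sig_of S k :> nat).
  elim=> [|k IH] Hk.
    by rewrite /in_l /sig_of /=; lia.
  have Hk1 : k < n by lia.
  have [I1 I2] := IH (ltnW Hk).
  have R1 := HR k true (ltnW Hk); have R2 := HR k false (ltnW Hk).
  move: I1 I2 R1 R2; rewrite !in_lS !out_l_lt // [sig_of S k.+1]/sig_of.
  by case: (dr k) => /=; lia.
have Hal : allowed (sig_of S).
  move=> k Hk; have [I1 I2] := Inv k (ltnW Hk); have [I3 I4] := Inv k.+1 Hk.
  have R1 := HR k true (ltnW Hk); have R2 := HR k false (ltnW Hk).
  move: I1 I2 R1 R2 I3 I4; rewrite !in_lS !out_l_lt //.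
  by case: (dr k) => /=; lia.
split=> //.
have E : forall j, j < nE G -> memS S j = memb (sig_of S) j.
  move=> j Hj; case: (idx_cases Hj) => [->|->|[m Hm [r Hr ->]]|[r Hr ->]].
  - by rewrite /memb /= /sig_of; lia.
  - by [].
  - rewrite memb_eq // /memb_kr Hm.
    have [I1 I2] := Inv m (ltnW Hm); have [I3 I4] := Inv m.+1 Hm.
    have R1 := HR m true (ltnW Hm); have R2 := HR m false (ltnW Hm).
    move: I1 I2 R1 R2 I3 I4; rewrite !in_lS !out_l_lt //.
    case: r Hr => [|[|[|r]]] Hr //.
    + by rewrite addn0; case: (dr m) => /=; lia.
    + by rewrite (_ : 2 + (3 * m + 1) = 3 + 3 * m); [case: (dr m) => /=; lia | lia].
    + by rewrite (_ : 2 + (3 * m + 2) = 4 + 3 * m); [case: (dr m) => /=; lia | lia].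
  - rewrite memb_eq ?(ltn_trans Hr) // /memb_kr ltnn.
    have [I1 I2] := Inv n (leqnn n).
    have R1 := HR n true (leqnn n); have R2 := HR n false (leqnn n).
    move: I1 I2 R1 R2; rewrite !out_l_n.
    case: r Hr => [|[|r]] Hr //.
    + by rewrite addn0; case: (odd n) => /=; lia.
    + by rewrite (_ : 2 + (3 * n + 1) = 3 + 3 * n); [case: (odd n) => /=; lia | lia].
apply/setP => f; rewrite inE -memS_ord E //.
Qed.

End Build.

Lemma count_1 (p : pred nat) x s : uniq s -> x \in s ->
  count (fun j => p j && (j == x)) s = p x.
Proof.
elim: s => [|y s IH] //= /andP[Hy Us]; rewrite inE => /orP[/eqP ->|Hx].
  rewrite eqxx andbT (eq_in_count (a2 := pred0)) ?count_pred0 ?addn0 //.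
  by move=> j Hj /=; case: (eqVneq j y) => [E|]; [rewrite -E Hj in Hy | rewrite andbF].
rewrite IH //; case: eqP => [E|_]; last by rewrite andbF.
by rewrite E Hx in Hy.
Qed.

Lemma count_or1 (p a : pred nat) x s : uniq s -> x \in s -> ~~ a x ->
  count (fun j => p j && (a j || (j == x))) s = count (fun j => p j && a j) s + p x.
Proof.
move=> Us Hx Ha.
have -> : count (fun j => p j && (a j || (j == x))) s =
  count (fun j => p j && a j) s + count (fun j => p j && (j == x)) s.
  elim: s Us {Hx} => [|y s IH] //= /andP[_ Us]; rewrite IH //.
  case: (p y) => /=; last by [].
  case: (eqVneq y x) => [E|Ne] /=.
    by rewrite E (negbTE Ha) /=; lia.
  lia.
by rewrite count_1.
Qed.

Section Height.
Variables (L : Type) (G : snake L).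
Local Notation n := (size (dirs G)).
Local Notation dr k := (nth false (dirs G) k).
Local Notation c k := (corner G k).

Definition ed (j : nat) : edge := (nth (x0e G) (ledges G) j).1.

Lemma ed_a : ed 0 = south (c 0). Proof. by []. Qed.
Lemma ed_b : ed 1 = west (c 0). Proof. by []. Qed.
Lemma ed_tr m r : m < n -> r < 3 -> ed (2 + (3 * m + r)) =
  if dr m then nth (south (0,0)) [:: north (c m); east (c m); west (c m.+1)] r
  else nth (south (0,0)) [:: east (c m); north (c m); south (c m.+1)] r.
Proof.
move=> Hm Hr; rewrite /ed nth_ledges_tr // /transition.
by case: (dr m); case: r Hr => [|[|[|r]]].
Qed.
Lemma ed_fin r : r < 2 -> ed (2 + (3 * n + r)) =
  if ~~ odd n then nth (south (0,0)) [:: north (c n); east (c n)] r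
  else nth (south (0,0)) [:: east (c n); north (c n)] r.
Proof.
move=> Hr; rewrite /ed nth_ledges_fin // /final_edges /ntiles /=.
by case: (odd n); case: r Hr => [|[|r]].
Qed.

Definition Pk (k j : nat) : bool :=
  let: (x, y, h) := ed j in [&& ~~ h, x <= (c k).1 & y == (c k).2].

Lemma Pk_0 j : j < nE G -> Pk 0 j = (j == 1).
Proof.
move=> Hj; rewrite /Pk.
case: (idx_cases Hj) => [->|->|[m Hm [r Hr ->]]|[r Hr ->]].
- by rewrite ed_a.
- by rewrite ed_b corner0 /=.
- rewrite ed_tr //.
  have S := cornerS Hm; have Mm := corner_mono (leq0n m) (ltnW Hm).
  have Mm1 := corner_mono (leq0n m.+1) Hm.
  move: S Mm Mm1; rewrite corner0.
  case: (dr m) => ->; case: r Hr => [|[|[|r]]] Hr //=; lia.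
- rewrite ed_fin //.
  have Mm := corner_mono (leq0n n) (leqnn n).
  move: Mm; rewrite corner0.
  case: (odd n); case: r Hr => [|[|r]] Hr //=; lia.
Qed.

Lemma Pk_S k j : k < n -> j < nE G ->
  Pk k.+1 j = if dr k then j == 4 + 3 * k else Pk k j || (j == 2 + 3 * k).
Proof.
move=> Hk Hj; rewrite /Pk.
have Sk := cornerS Hk.
have Ck := corner_sum (ltnW Hk).
case: (idx_cases Hj) => [->|->|[m Hm [r Hr ->]]|[r Hr ->]].
- by rewrite ed_a; case: (dr k).
- rewrite ed_b corner0 Sk; move: Ck; case: (dr k) => /=; lia.
- rewrite ed_tr //.
  have Sm := cornerS Hm.
  have Cm := corner_sum (ltnW Hm).
  have M1 : m <= k -> (c m).1 <= (c k).1 /\ (c m).2 <= (c k).2 := fun H => corner_mono H (ltnW Hk).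
  have M2 : k <= m -> (c k).1 <= (c m).1 /\ (c k).2 <= (c m).2 := fun H => corner_mono H (ltnW Hm).
  have M3 : m.+1 <= k -> (c m.+1).1 <= (c k).1 /\ (c m.+1).2 <= (c k).2 := fun H => corner_mono H (ltnW Hk).
  have M4 : k.+1 <= m -> (c k.+1).1 <= (c m).1 /\ (c k.+1).2 <= (c m).2 := fun H => corner_mono H (ltnW Hm).
  move: M1 M2 M3 M4; rewrite Sm Sk; move: Cm Ck.
  have [Emk|Nmk] := eqVneq m k.
    subst m; case: (dr k); case: r Hr => [|[|[|r]]] Hr //=; lia.
  case: (dr m); case: (dr k); case: r Hr => [|[|[|r]]] Hr //=; lia.
- rewrite ed_fin //.
  have Cn := corner_sum (leqnn n).
  have M2 : k <= n -> (c k).1 <= (c n).1 /\ (c k).2 <= (c n).2 := fun H => corner_mono H (leqnn n).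
  have M4 : k.+1 <= n -> (c k.+1).1 <= (c n).1 /\ (c k.+1).2 <= (c n).2 := fun H => corner_mono H (leqnn n).
  move: M2 M4; rewrite Sk; move: Cn Ck.
  case: (odd n); case: (dr k); case: r Hr => [|[|r]] Hr //=; lia.
Qed.

Lemma card_Pk (D : {set 'I_(nE G)}) k :
  #|[set e in D | let: (x, y, h) := edge_of e in
                  [&& ~~ h, x <= (corner G k).1 & y == (corner G k).2]]| =
  count (fun j => memS D j && Pk k j) (iota 0 (nE G)).
Proof.
rewrite -card_ord_count; apply: eq_card => f.
by rewrite !inE memS_ord.
Qed.

Lemma memS_sd (S T : {set 'I_(nE G)}) j : j < nE G ->
  memS (symdiff S T) j = (memS S j != memS T j).
Proof.
move=> Hj; have -> : j = Ordinal Hj by [].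
by rewrite !memS_ord /symdiff !inE; case: (_ \in S); case: (_ \in T).
Qed.

Lemma Pk_e k : k < n -> dr k = false -> Pk k (2 + 3 * k) = false.
Proof.
move=> Hk Hd; rewrite /Pk -[2 + 3 * k]addn0 -addnA ed_tr // Hd /=; lia.
Qed.

Lemma encl_eq s k : allowed G s -> k <= n ->
  odd (count (fun j => memS (symdiff (build G s) (build G odd)) j && Pk k j)
        (iota 0 (nE G))) = s k (+) odd k.
Proof.
move=> Ha; elim: k => [|k IH] Hk.
  rewrite (eq_in_count (a2 := fun j => memS (symdiff (build G s) (build G odd)) j && (j == 1))); last first.
    by move=> j; rewrite mem_iota add0n => /andP[_ Hj]; rewrite Pk_0.
  rewrite count_1 ?iota_uniq ?mem_iota ?nE_eq //; last lia.
  rewrite memS_sd ?nE_eq; last lia.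
  rewrite !memS_build ?nE_eq; try lia.
  by rewrite /memb /=; case: (s 0).
have Hk1 : k < n by lia.
rewrite (eq_in_count (a2 := fun j => memS (symdiff (build G s) (build G odd)) j &&
   (if dr k then j == 4 + 3 * k else Pk k j || (j == 2 + 3 * k)))); last first.
  by move=> j; rewrite mem_iota add0n => /andP[_ Hj]; rewrite Pk_S.
have Hak := Ha k Hk1.
case Hd: (dr k).
  rewrite count_1 ?iota_uniq ?mem_iota ?nE_eq //; last lia.
  rewrite memS_sd ?nE_eq; last lia.
  rewrite !memS_build ?nE_eq; try lia.
  rewrite !memb_g /memb_kr Hk1 Hd /=.
  move: Hak; rewrite Hd.
  by case: (s k); case: (s k.+1); case: (odd k).
rewrite count_or1 ?iota_uniq ?mem_iota ?nE_eq ?Pk_e //; try lia.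
rewrite oddD -nE_eq IH; last lia.
rewrite memS_sd ?nE_eq; last lia.
rewrite !memS_build ?nE_eq; try lia.
rewrite !memb_e /memb_kr Hk1 Hd /=.
move: Hak; rewrite Hd.
by case: (s k); case: (s k.+1); case: (odd k).
Qed.

End Height.

Section Min.
Variables (L : Type) (G : snake L).
Local Notation n := (size (dirs G)).
Local Notation dr k := (nth false (dirs G) k).
Local Notation c k := (corner G k).

Lemma build_ext s t : (forall k, k <= n -> s k = t k) -> build G s = build G t.
Proof.
move=> E; apply/setP => f; rewrite !inE.
case: (idx_cases (ltn_ord f)) => [->|->|[m Hm [r Hr ->]]|[r Hr ->]].
- by rewrite /memb /= E.
- by rewrite /memb /= E.
- by rewrite !memb_eq // /memb_kr Hm !E //; lia.
- by rewrite !memb_eq ?(ltn_trans Hr) // /memb_kr ltnn !E.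
Qed.

Lemma not_boundary_e k : k < n -> is_boundary G (ed G (2 + 3 * k)) = false.
Proof.
move=> Hk; rewrite /is_boundary /ntiles.
have -> : n.+1 = k + (2 + (n - k - 1)) by lia.
rewrite iotaD iotaD !count_cat add0n /=.
have E1 : ed G (2 + 3 * k) \in tile_sides G k.
  rewrite -[2 + 3 * k]addn0 -addnA ed_tr //.
  by case: (dr k); rewrite /tile_sides !inE eqxx ?orbT.
have E2 : ed G (2 + 3 * k) \in tile_sides G k.+1.
  rewrite -[2 + 3 * k]addn0 -addnA ed_tr // /tile_sides cornerS //.
  by case: (dr k); rewrite /tile_sides !inE /= /north /east /south /west !xpair_eqE /=; lia.
rewrite E1 E2.
apply/negbTE; lia.
Qed.

Lemma minimal_Pm Pm : is_minimal_matching Pm -> Pm = build G odd.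
Proof.
case/and3P => Hp /forall_inP Hb /exists_inP [e0 He0 /eqP Hs].
have [Ha E] := perfect_build Hp.
set s := sig_of Pm in Ha E.
have He : forall k, k < n -> memb G s (2 + 3 * k) = false.
  move=> k Hk; apply/negP => Hm.
  have Hj : 2 + 3 * k < nE G by rewrite nE_eq; lia.
  have := Hb (Ordinal Hj); rewrite E inE Hm => /(_ isT).
  by rewrite (not_boundary_e Hk).
have H0 : nat_of_ord e0 = 0.
  have : ed G e0 = south (c 0) := Hs.
  case: (idx_cases (ltn_ord e0)) => [->|->|[m Hm [r Hr ->]]|[r Hr ->]] //.
  - rewrite ed_tr // corner0; have := corner_sum (ltnW Hm); have := cornerS Hm.
    case: (dr m) => ->; case: r Hr => [|[|[|r]]] Hr //=; rewrite /north /east /west /south;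
    move=> H [] /=; lia.
  - rewrite ed_fin // corner0.
    by case: (odd n); case: r Hr => [|[|r]] Hr //=; rewrite /north /east => -[].
have Hs0 : s 0 = false.
  by move: He0; rewrite E inE /memb H0 /= => /negbTE.
have Hso : forall k, k <= n -> s k = odd k.
  elim=> [|k IH] Hk //.
  have Hk1 : k < n by lia.
  rewrite [odd k.+1]/= -IH; last lia.
  move: (He k Hk1) (Ha k Hk1); rewrite memb_e /memb_kr Hk1.
  by case: (dr k); case: (s k); case: (s k.+1).
by rewrite E; apply: build_ext.
Qed.

End Min.

Local Open Scope ring_scope.

Fixpoint allbits (m : nat) : seq (seq bool) :=
  if m is m'.+1 then [seq rcons t b | t <- allbits m', b <- [:: false; true]]
  else [:: [::]].

Lemma allbitsS m : allbits m.+1 = [seq rcons t b | t <- allbits m, b <- [:: false; true]].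
Proof. by []. Qed.

Lemma size_allbits m t : t \in allbits m -> size t = m.
Proof.
elim: m t => [|m IH] t; first by rewrite inE => /eqP ->.
by rewrite allbitsS => /allpairsP [[u b] [Hu _ ->]] /=; rewrite size_rcons IH.
Qed.

Lemma mem_allbits m t : size t = m -> t \in allbits m.
Proof.
elim: m t => [|m IH] t; first by move/size0nil ->; rewrite inE.
case/lastP: t => [|u b] //; rewrite size_rcons => -[Hu].
rewrite allbitsS; apply/allpairsP; exists (u, b) => /=; split => //; first exact: IH.
by case: b.
Qed.

Lemma uniq_allbits m : uniq (allbits m).
Proof.
elim: m => [|m IH] //.
rewrite allbitsS allpairs_uniq // => -[u b] [u' b'] _ _ /=.
by move/rcons_inj => [-> ->].
Qed.

Definition b2o (b : bool) : 'I_2 := if b then ord_max else ord0.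

Section Transfer.
Variable (F : fieldType).

Definition ent (A : 'M[F]_2) (b c : bool) : F := A (b2o b) (b2o c).

Definition mprod (m : nat -> 'M[F]_2) (N : nat) : 'M[F]_2 :=
  foldl (fun acc k => m k *m acc) 1%:M (iota 0 N).

Lemma mprodS m N : mprod m N.+1 = m N *m mprod m N.
Proof.
have E : iota 0 N.+1 = rcons (iota 0 N) N by rewrite -cats1 -addn1 iotaD.
by rewrite /mprod E foldl_rcons.
Qed.

Lemma sum_I2 (f : 'I_2 -> F) : \sum_(c < 2) f c = f (b2o false) + f (b2o true).
Proof.
rewrite !big_ord_recl big_ord0 addr0 /=; congr (_ + f _).
by apply: val_inj.
Qed.

Lemma entM (A B : 'M[F]_2) i j : ent (A *m B) i j = ent A i false * ent B false j + ent A i true * ent B true j.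
Proof. by rewrite /ent mxE sum_I2. Qed.

Definition tw_s (tw : nat -> bool) (t : seq bool) k := nth false t k (+) tw k.

Definition Pt (m : nat -> 'M[F]_2) (R : 'M[F]_2) (tw : nat -> bool) j N (t : seq bool) :=
  (\prod_(k < N) ent (m k) (tw_s tw t k.+1) (tw_s tw t k)) * ent R (tw_s tw t 0) j.

Lemma transfer (m : nat -> 'M[F]_2) (R : 'M[F]_2) (tw : nat -> bool) N i j :
  ent (mprod m N *m R) i j =
  \sum_(t <- allbits N.+1) (if tw_s tw t N == i then Pt m R tw j N t else 0).
Proof.
elim: N i => [|N IH] i.
  rewrite /mprod /= mul1mx !big_cons big_nil /= /Pt /tw_s /= !big_ord0 !mul1r addr0.
  by case: i; case: (tw 0); rewrite /= ?addr0 ?add0r.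
rewrite allbitsS big_allpairs_dep.
rewrite mprodS -mulmxA entM !IH !big_distrr -big_split.
rewrite big_seq [RHS]big_seq; apply: eq_bigr => t Ht.
have St := size_allbits Ht.
rewrite !big_cons big_nil /= addr0.
have Hn : forall b k, (k <= N)%N -> tw_s tw (rcons t b) k = tw_s tw t k.
  by move=> b k Hk; rewrite /tw_s nth_rcons St ltnS Hk.
have HN : forall b, tw_s tw (rcons t b) N.+1 = b (+) tw N.+1.
  by move=> b; rewrite /tw_s nth_rcons St ltnn eqxx.
have HP : forall b, Pt m R tw j N.+1 (rcons t b) =
    ent (m N) (b (+) tw N.+1) (tw_s tw t N) * Pt m R tw j N t.
  move=> b; rewrite /Pt big_ord_recr /= HN Hn // Hn //.
  rewrite (eq_bigr (fun k : 'I_N => ent (m k) (tw_s tw t k.+1) (tw_s tw t k))); last first.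
    by move=> k _; have Hk := ltn_ord k; rewrite !Hn //; lia.
  ring.
rewrite !HN !HP.
case: (tw_s tw t N); case: i; case: (tw N.+1); rewrite /= ?mulr0 ?add0r ?addr0 //.
Qed.

End Transfer.

Local Open Scope ring_scope.

Section ProdSplit.
Variable (F : fieldType).

Lemma prod_mid (f : nat -> F) a n :
  \prod_(a <= j < a + 3 * n) f j =
  \prod_(k < n) (f (a + 3 * k)%N * f (a + 3 * k).+1 * f (a + 3 * k).+2).
Proof.
elim: n => [|n IH]; first by rewrite muln0 addn0 big_geq // big_ord0.
rewrite (big_cat_nat (n := (a + 3 * n)%N)); try lia.
rewrite IH big_ord_recr /=; congr (_ * _).
rewrite big_ltn; last lia.
rewrite big_ltn; last lia.
rewrite big_ltn; last lia.
rewrite big_geq; last lia.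
by rewrite /= mulr1 mulrA.
Qed.

Lemma prod2 (f : nat -> F) a : \prod_(a <= i < a.+2) f i = f a * f a.+1.
Proof. by rewrite big_ltn // big_ltn // big_geq // /= mulr1. Qed.

Lemma prod_split (f : nat -> F) n :
  \prod_(0 <= j < 3 * n + 4) f j =
  f 0%N * f 1%N * \prod_(k < n) (f (2 + 3 * k)%N * f (3 + 3 * k)%N * f (4 + 3 * k)%N) *
  (f (2 + 3 * n)%N * f (3 + 3 * n)%N).
Proof.
rewrite (big_cat_nat (n := 2%N)); try lia.
rewrite (big_cat_nat (n := (2 + 3 * n)%N) (m := 2%N)); try lia.
rewrite prod_mid prod2 (_ : (3 * n + 4 = (2 + 3 * n).+2)%N); last lia.
by rewrite prod2 /= mulrA.
Qed.

End ProdSplit.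

Definition pw (F : fieldType) (b : bool) (x : F) : F := if b then x else 1.

Lemma telescope (F : fieldType) (s : nat -> bool) (X : nat -> F) n :
  pw (s 0%N) (X 0%N) * \prod_(k < n) (pw (~~ s k) (X k) * pw (s k.+1) (X k.+1)) *
  pw (~~ s n) (X n) = \prod_(k < n.+1) X k.
Proof.
have E1 : \prod_(k < n.+1) pw (s k) (X k) =
    pw (s 0%N) (X 0%N) * \prod_(k < n) pw (s k.+1) (X k.+1) by rewrite big_ord_recl.
have E2 : \prod_(k < n.+1) pw (~~ s k) (X k) =
    \prod_(k < n) pw (~~ s k) (X k) * pw (~~ s n) (X n) by rewrite big_ord_recr.
have E3 : \prod_(k < n.+1) X k =
    \prod_(k < n.+1) pw (s k) (X k) * \prod_(k < n.+1) pw (~~ s k) (X k).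
  rewrite -big_split /=; apply: eq_bigr => k _.
  by rewrite /pw; case: (s k); rewrite ?mulr1 ?mul1r.
by rewrite E3 E1 E2 big_split /=; ring.
Qed.

Section Main.
Variables (L : Type) (G : snake L) (F : fieldType) (xv yv : L -> F).
Local Notation n := (size (dirs G)).
Local Notation dr k := (nth false (dirs G) k).

Definition lab (j : nat) : L := (nth (x0e G) (ledges G) j).2.

Lemma lab_e k : (k < n)%N -> lab (2 + 3 * k) = lA G k.
Proof.
by move=> Hk; rewrite /lab -[(2 + 3 * k)%N]addn0 -addnA nth_ledges_tr // /transition; case: (dr k).
Qed.
Lemma lab_f k : (k < n)%N -> lab (3 + 3 * k) = li G k.+1.
Proof.
move=> Hk; rewrite /lab (_ : (3 + 3 * k = 2 + (3 * k + 1))%N); last lia.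
by rewrite nth_ledges_tr // /transition; case: (dr k).
Qed.
Lemma lab_g k : (k < n)%N -> lab (4 + 3 * k) = li G k.
Proof.
move=> Hk; rewrite /lab (_ : (4 + 3 * k = 2 + (3 * k + 2))%N); last lia.
by rewrite nth_ledges_tr // /transition; case: (dr k).
Qed.
Lemma lab_w : lab (2 + 3 * n) = lw G.
Proof.
by rewrite /lab -[(2 + 3 * n)%N]addn0 -addnA nth_ledges_fin // /final_edges; case: ifP.
Qed.
Lemma lab_z : lab (3 + 3 * n) = lz G.
Proof.
rewrite /lab (_ : (3 + 3 * n = 2 + (3 * n + 1))%N); last lia.
by rewrite nth_ledges_fin // /final_edges; case: ifP.
Qed.

Lemma weight_build s :
  weight xv (build G s) =
  pw (~~ s 0%N) (xv (la G)) * pw (s 0%N) (xv (lb G)) *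
  \prod_(k < n) (pw (memb_kr G s k 0) (xv (lA G k)) * pw (memb_kr G s k 1) (xv (li G k.+1)) *
                 pw (memb_kr G s k 2) (xv (li G k))) *
  (pw (memb_kr G s n 0) (xv (lw G)) * pw (memb_kr G s n 1) (xv (lz G))).
Proof.
rewrite /weight big_mkcond /=.
rewrite (eq_bigr (fun e : 'I_(nE G) => pw (memb G s e) (xv (lab e)))); last first.
  by move=> e _; rewrite inE.
rewrite -(big_mkord xpredT (fun j => pw (memb G s j) (xv (lab j)))).
rewrite nE_eq prod_split memb_e memb_f lab_w lab_z.
congr (_ * _ * _); apply: eq_bigr => k _.
by rewrite memb_e memb_f memb_g lab_e ?lab_f ?lab_g.
Qed.

Lemma height_build s : allowed G s ->
  height yv (build G odd) (build G s) = \prod_(k < n.+1) pw (s k (+) odd k) (yv (li G k)).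
Proof.
move=> Ha; rewrite /height big_mkcond /=; apply: eq_bigr => k _.
rewrite /encloses card_Pk encl_eq //.
by have := ltn_ord k.
Qed.

Hypothesis Hx : forall l : L, xv l != 0.

Lemma step_k s k : (k < n)%N -> (if dr k then ~~ (s k && s k.+1) else s k || s k.+1) ->
  pw (memb_kr G s k 0) (xv (lA G k)) * pw (memb_kr G s k 1) (xv (li G k.+1)) *
  pw (memb_kr G s k 2) (xv (li G k)) * pw (s k (+) odd k) (yv (li G k)) =
  ent (mj G xv yv k) (s k.+1 (+) odd k.+1) (s k (+) odd k) *
  (pw (~~ (s k (+) odd k)) (xv (li G k)) * pw (s k.+1 (+) odd k.+1) (xv (li G k.+1))).
Proof.
move=> Hk Ha; have H1 := Hx (li G k); have H2 := Hx (li G k.+1).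
rewrite /memb_kr Hk /mj /ent /mx2 /= .
case: (dr k) Ha; case: (s k); case: (s k.+1); case: (odd k) => //= _;
  rewrite !mxE /= /pw; try field; rewrite ?H1 ?H2 //.
Qed.

Lemma end_right (b : bool) :
  pw (~~ b) (xv (la G)) * pw b (xv (lb G)) =
  ent (right_mx G xv) (b (+) odd 0) true * pw (b (+) odd 0) (xv (li G 0)).
Proof.
have H0 := Hx (li G 0).
by case: b; rewrite /ent /right_mx /mx2 !mxE /= /pw; try field; rewrite ?mulr1 ?mul1r.
Qed.

Lemma end_left s :
  pw (memb_kr G s n 0) (xv (lw G)) * pw (memb_kr G s n 1) (xv (lz G)) *
  pw (s n (+) odd n) (yv (li G n)) =
  ent (left_mx G xv yv) false (s n (+) odd n) * pw (~~ (s n (+) odd n)) (xv (li G n)).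
Proof.
have H0 := Hx (li G n).
rewrite /memb_kr ltnn /ent /left_mx /mx2 !mxE /= /pw.
by case: (s n); case: (odd n) => /=; try field; rewrite ?mulr1 ?mul1r.
Qed.

Lemma wh_eq t : allowed G (nth false t) ->
  weight xv (build G (nth false t)) * height yv (build G odd) (build G (nth false t)) =
  (\prod_(k < ntiles G) xv (li G k)) *
  (ent (left_mx G xv yv) false (tw_s odd t n) * Pt (mj G xv yv) (right_mx G xv) odd true n t).
Proof.
move=> Ha; rewrite weight_build height_build // big_ord_recr /=.
set s := nth false t.
have Emid : \prod_(k < n) (pw (memb_kr G s k 0) (xv (lA G k)) * pw (memb_kr G s k 1) (xv (li G k.+1)) *
                 pw (memb_kr G s k 2) (xv (li G k))) *
            \prod_(k < n) pw (s k (+) odd k) (yv (li G k)) =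
            \prod_(k < n) ent (mj G xv yv k) (s k.+1 (+) odd k.+1) (s k (+) odd k) *
            \prod_(k < n) (pw (~~ (s k (+) odd k)) (xv (li G k)) *
                            pw (s k.+1 (+) odd k.+1) (xv (li G k.+1))).
  rewrite -!big_split /=; apply: eq_bigr => k _.
  by rewrite step_k //; apply: Ha.
have Etel := telescope (fun k => s k (+) odd k) (fun k => xv (li G k)) n.
have Er := end_right (s 0%N).
have El := end_left s.
rewrite /ntiles -Etel /Pt /tw_s -/s.
transitivity ((pw (~~ s 0%N) (xv (la G)) * pw (s 0%N) (xv (lb G))) *
  (\prod_(k < n) (pw (memb_kr G s k 0) (xv (lA G k)) * pw (memb_kr G s k 1) (xv (li G k.+1)) *
                 pw (memb_kr G s k 2) (xv (li G k))) *
   \prod_(k < n) pw (s k (+) odd k) (yv (li G k))) *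
  (pw (memb_kr G s n 0) (xv (lw G)) * pw (memb_kr G s n 1) (xv (lz G)) *
   pw (s n (+) odd n) (yv (li G n)))); first by ring.
rewrite Er Emid El; ring.
Qed.

End Main.

Local Open Scope ring_scope.

Lemma sum_const_count (F : fieldType) (T : Type) (l : seq T) (P : pred T) (c : F) :
  \sum_(t <- l | P t) c = c *+ count P l.
Proof.
elim: l => [|x l IH]; first by rewrite big_nil.
by rewrite big_cons IH /=; case: (P x); rewrite ?mulrS ?add0n.
Qed.

Section Final.
Variables (L : Type) (G : snake L).
Local Notation n := (size (dirs G)).
Local Notation dr k := (nth false (dirs G) k).

Definition allowedb (t : seq bool) : bool :=
  all (fun k => if dr k then ~~ (nth false t k && nth false t k.+1)
                else nth false t k || nth false t k.+1) (iota 0 n).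

Lemma allowedP t : allowedb t -> allowed G (nth false t).
Proof.
by move=> /allP H k Hk; apply: H; rewrite mem_iota add0n Hk.
Qed.

Lemma allowedP' t : allowed G (nth false t) -> allowedb t.
Proof.
by move=> H; apply/allP => k; rewrite mem_iota add0n => /andP[_ Hk]; apply: H.
Qed.

Lemma build_inj s s' : allowed G s -> allowed G s' -> build G s = build G s' ->
  forall k, (k <= n)%N -> s k = s' k.
Proof.
move=> Ha Ha' E k Hk.
have := encl_eq Ha Hk; rewrite E encl_eq //.
by case: (s k); case: (s' k); case: (odd k).
Qed.

Lemma reindex_pm (F : fieldType) (Fw : {set 'I_(nE G)} -> F) :
  \sum_(S | is_perfect S) Fw S =
  \sum_(t <- allbits n.+1 | allowedb t) Fw (build G (nth false t)).
Proof.
symmetry.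
rewrite (eq_bigr (fun t => \sum_(S | S == build G (nth false t)) Fw S)); last first.
  by move=> t _; rewrite big_pred1_eq.
rewrite big_mkcond.
rewrite (eq_bigr (fun t => \sum_S (if allowedb t && (S == build G (nth false t)) then Fw S else 0)));
  last first.
  move=> t _; case: (allowedb t); last by rewrite big1.
  by rewrite big_mkcond.
rewrite exchange_big [RHS]big_mkcond; apply: eq_bigr => S _.
rewrite -big_mkcond sum_const_count.
case: (boolP (is_perfect S)) => HS.
  have [Ha E] := perfect_build HS.
  set t0 := mkseq (sig_of S) n.+1.
  have St0 : size t0 = n.+1 by rewrite size_mkseq.
  have Nt0 : forall k, (k <= n)%N -> nth false t0 k = sig_of S k.
    by move=> k Hk; rewrite nth_mkseq.
  rewrite (eq_in_count (a2 := pred1 t0)); last first.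
    move=> t Ht; have St := size_allbits Ht; rewrite /=.
    apply/idP/idP.
      case/andP => Hab /eqP ES; apply/eqP.
      apply: (eq_from_nth (x0 := false)); first by rewrite St St0.
      move=> k; rewrite St => Hk.
      rewrite Nt0 //; apply: (build_inj (allowedP Hab) Ha); first by rewrite -ES.
      by [].
    move/eqP => ->; apply/andP; split.
      apply: allowedP' => k Hk; rewrite !Nt0 ?(ltnW Hk) //; exact: Ha.
    by apply/eqP; rewrite {1}E; apply: build_ext => k Hk; rewrite Nt0.
  by rewrite (count_uniq_mem _ (uniq_allbits _)) (mem_allbits St0).
rewrite (eq_in_count (a2 := pred0)) ?count_pred0 //.
move=> t Ht /=; apply/negbTE; apply/andP => -[Hab /eqP ES].
by move: HS; rewrite ES build_perfect //; apply: allowedP.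
Qed.

End Final.

Section Final2.
Variables (L : Type) (G : snake L) (F : fieldType) (xv yv : L -> F).
Local Notation n := (size (dirs G)).
Local Notation dr k := (nth false (dirs G) k).

Definition Term (t : seq bool) : F :=
  ent (left_mx G xv yv) false (tw_s odd t n) * Pt (mj G xv yv) (right_mx G xv) odd true n t.

Lemma UR_sum : UR (left_mx G xv yv *m Mmat G xv yv *m right_mx G xv) =
  \sum_(t <- allbits n.+1) Term t.
Proof.
rewrite /UR -mulmxA.
change (ent (left_mx G xv yv *m (mprod (mj G xv yv) n *m right_mx G xv)) false true =
  \sum_(t <- allbits n.+1) Term t).
rewrite entM !(transfer _ _ odd) !big_distrr -big_split; apply: eq_bigr => t _.
by rewrite /Term; case: (tw_s odd t n); rewrite /= ?mulr0 ?addr0 ?add0r.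
Qed.

Lemma Term_zero t : ~~ allowedb G t -> Term t = 0.
Proof.
case/allPn => k; rewrite mem_iota add0n => /andP[_ Hk] Hv.
rewrite /Term /Pt (bigD1 (Ordinal Hk)) //=.
suff -> : ent (mj G xv yv k) (tw_s odd t k.+1) (tw_s odd t k) = 0 by rewrite !mul0r mulr0.
move: Hv; rewrite /mj /ent /mx2 /tw_s /=.
by case: (dr k); case: (nth false t k); case: (nth false t k.+1); case: (odd k) => //= _;
  rewrite !mxE.
Qed.

End Final2.

Unset Implicit Arguments.
Local Open Scope ring_scope.

Theorem mainTheorem4 (F : fieldType) (L : Type) (G : snake L) (xv yv : L -> F)
    (Pm : {set 'I_(nE G)}) :
  (forall l : L, xv l != 0) ->
  is_minimal_matching Pm ->
  \sum_(S : {set 'I_(nE G)} | is_perfect S) weight xv S * height yv Pm S =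
  (\prod_(k < ntiles G) xv (li G k)) *
    UR (left_mx G xv yv *m Mmat G xv yv *m right_mx G xv).
Proof.
move=> Hx Hmin; rewrite (minimal_Pm Hmin) reindex_pm UR_sum.
rewrite big_seq_cond.
rewrite (eq_bigr (fun t => (\prod_(k < ntiles G) xv (li G k)) * Term G xv yv t)); last first.
  by move=> t /andP[_ Ha]; rewrite wh_eq //; apply: allowedP.
rewrite -big_seq_cond -big_distrr /=; congr (_ * _).
rewrite big_mkcond /=; apply: eq_bigr => t _.
by case: ifP => // /negbT /Term_zero ->.
Qed.
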